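(* Let $k\ge3$, let $G$ be a graph and $L$ a $k$-list assignment for $G$. Let $B$ be a bug in $G$ whose root $r$ has $d_G(r)\le 1$. Then $B$ is safe in $G$ if at least one of the following holds: $|V(B)|\ge2$; there is no edge between $V(B)$ and $V(G)\setminus V(B)$; $|V(G)|\not\equiv 0\pmod k$.
   Context: $V_{3^+}(G)$ is the set of vertices of degree at least $3$ in $G$. A bug in $G$ is an induced connected subgraph $B$ together with a vertex $r\in V(B)$, its root, such that $V(B)\cap V_{3^+}(G)\subseteq\{r\}$. A $k$-list assignment $L$ assigns to each vertex $v$ a set $L(v)$ of exactly $k$ colors; an $L$-coloring is a proper vertex coloring $f$ with $f(v)\in L(v)$. For an integer $n$ and $k\ge1$, $n\bmod^* k$ is the unique $m\in\{1,\dots,k\}$ with $n\equiv m\pmod k$. If $|V(G)|=n\ge 1$, an $L$-coloring $f$ of $G$ is strongly equitable (SE) if every color class has at most $\lceil n/k\rceil$ vertices and the number of colors whose class has exactly $\lceil n/k\rceil$ vertices (the full classes) is at most $n\bmod^* k$; the empty graph is regarded as SE $L$-colorable. A subgraph $S\subseteq G$ is safe in $G$ if every SE $L$-coloring of $G-V(S)$ (with the restriction of $L$) can be extended to an SE $L$-coloring of $G$. *)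

(* Defs.v *)
From mathcomp Require Import all_boot.
Set Implicit Arguments. Unset Strict Implicit. Unset Printing Implicit Defensive.

Definition simple_graph (T : finType) (e : rel T) : Prop :=
  symmetric e /\ irreflexive e.

Definition deg (T : finType) (e : rel T) (v : T) : nat := #|[set u | e v u]|.

Definition V3plus (T : finType) (e : rel T) : {set T} :=
  [set v | 3 <= deg e v].

(* the induced subgraph on B is connected (B nonempty is required separately) *)
Definition induced_connected (T : finType) (e : rel T) (B : {set T}) : Prop :=
  forall x y, x \in B -> y \in B ->
    connect [rel a b | [&& e a b, a \in B & b \in B]] x y.

Definition is_bug (T : finType) (e : rel T) (B : {set T}) (r : T) : Prop :=
  [/\ r \in B, induced_connected e B & B :&: V3plus e \subset [set r]].

Definition list_assignment (T C : finType) (k : nat) (L : T -> {set C}) : Prop :=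
  forall v, #|L v| = k.

Definition ceil_div (n k : nat) : nat := (n + k - 1) %/ k.

(* n mod* k : the unique m in {1..k} with n = m mod k *)
Definition modstar (n k : nat) : nat := if n %% k == 0 then k else n %% k.

(* f is an L-coloring of the induced subgraph G[U] (only values on U matter) *)
Definition L_coloring (T C : finType) (e : rel T) (L : T -> {set C})
  (U : {set T}) (f : T -> C) : Prop :=
  (forall v, v \in U -> f v \in L v) /\
  (forall u v, u \in U -> v \in U -> e u v -> f u != f v).

Definition color_class (T C : finType) (U : {set T}) (f : T -> C) (c : C) : {set T} :=
  [set v in U | f v == c].

(* strongly equitable L-coloring of G[U], with k the list size;
   the empty graph is regarded as SE L-colorable. *)
Definition SE_coloring (T C : finType) (e : rel T) (k : nat) (L : T -> {set C})
  (U : {set T}) (f : T -> C) : Prop :=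
  L_coloring e L U f /\
  (#|U| = 0 \/
   ((forall c, #|color_class U f c| <= ceil_div #|U| k) /\
    #|[set c | #|color_class U f c| == ceil_div #|U| k]| <= modstar #|U| k)).

Definition safe (T C : finType) (e : rel T) (k : nat) (L : T -> {set C})
  (S : {set T}) : Prop :=
  forall f : T -> C, SE_coloring e k L (~: S) f ->
    exists g : T -> C, SE_coloring e k L [set: T] g /\
      (forall v, v \in ~: S -> g v = f v).

(* Main.v *)
Require Import Defs.
From mathcomp Require Import all_boot zify.
Set Implicit Arguments. Unset Strict Implicit. Unset Printing Implicit Defensive.


Section Graph.
Variables (T : finType) (e : rel T).
Hypothesis sym : symmetric e.

Definition RW (W : {set T}) : rel T := [rel a b | [&& e a b, a \in W & b \in W]].

Lemma leaf_conn W w : induced_connected e W ->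
  (forall a b, a \in W -> b \in W -> e w a -> e w b -> a = b) ->
  induced_connected e (W :\ w).
Proof.
move=> HW Hl x y; rewrite !in_setD1 => /andP [xw xW] /andP [yw yW].
have /connectP [p Hp Hy] := HW x y xW yW.
case: (shortenP Hp) Hy => p' Hp' Hu _ {Hp} Hy.
have Hall : all (fun t => t \in W) (x :: p').
  rewrite /= xW /=.
  elim: p' x Hp' {Hu Hy xw xW} => //= a s IH x /andP [/and3P [_ _ aW] Hs].
  by rewrite aW (IH a Hs).
have wn : w \notin x :: p'.
  apply/negP => Hw; move: Hw; rewrite inE => /orP [/eqP Hwx|Hw].
    by rewrite Hwx eqxx in xw.
  move: Hp' Hu Hy Hall; case/splitPr: Hw => p1 p2.
  case: p2 => [|a p3].
    by move=> _ _; rewrite last_cat /= => Hy; rewrite -Hy eqxx in yw.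
  move=> Hpp Hu _ _; move: Hpp.
  rewrite cat_path /= => /andP [_ /and3P [/and3P [ebw bW _] /and3P [ewa _ aW] _]].
  have Hab : a = last x p1 by apply: Hl => //; rewrite sym.
  move: Hu; rewrite -cat_cons cat_uniq => /and3P [_ /hasP Hh _]; apply: Hh.
  exists a; first by rewrite !inE eqxx orbT.
  by rewrite /= Hab mem_last.
apply/connectP; exists p' => //.
apply: (sub_in_path (P := fun t => t \in W :\ w) (e := RW W)).
- by move=> a b Ha Hb /= /and3P [-> _ _]; rewrite Ha Hb.
- apply/allP => t Ht; rewrite in_setD1 (allP Hall _ Ht) andbT.
  by apply/negP => /eqP Htw; rewrite -Htw Ht in wn.
- exact: Hp'.
Qed.

Lemma has_nbr W w b : induced_connected e W -> w \in W -> b \in W -> b != w ->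
  exists2 y, y \in W & e w y.
Proof.
move=> HW wW bW bw; have /connectP [p Hp Hb] := HW w b wW bW.
case: p Hp Hb => [|y p] /=; first by move=> _ Hb; rewrite Hb eqxx in bw.
by case/andP => /and3P [ewy _ yW] _ _; exists y.
Qed.

End Graph.

Section Graph2.
Variables (T : finType) (e : rel T).
Hypothesis sym : symmetric e.
Hypothesis irr : irreflexive e.

Lemma nb1 v a b : deg e v <= 1 -> e v a -> e v b -> a = b.
Proof.
move=> H ea eb; apply/eqP; apply/negPn/negP => ab.
move: H; rewrite /deg (cardsD1 a) (cardsD1 b (_ :\ a)) !in_setD1 !inE ea eb.
by rewrite eq_sym ab.
Qed.

Lemma nb2 v z a b : deg e v <= 2 -> e v z -> e v a -> e v b -> a != z -> b != z -> a = b.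
Proof.
move=> H ez ea eb az bz; apply/eqP; apply/negPn/negP => ab.
move: H; rewrite /deg (cardsD1 z) (cardsD1 a (_ :\ z)) (cardsD1 b ((_ :\ z) :\ a)).
by rewrite !in_setD1 !inE ez ea eb az bz eq_sym ab.
Qed.

Definition out_unique (W : {set T}) := forall u1 v1 u2 v2,
  u1 \in W -> v1 \notin W -> e u1 v1 -> u2 \in W -> v2 \notin W -> e u2 v2 ->
  u1 = u2 /\ v1 = v2.

Lemma Qlem n : forall (B : {set T}) r z, #|B| <= n -> induced_connected e B -> r \in B ->
  (forall v, v \in B -> deg e v <= 2) -> (deg e r <= 1 \/ (e r z /\ z \notin B)) ->
  forall u1 v1 u2 v2, u1 \in B -> v1 \notin B -> e u1 v1 -> ~ (u1 = r /\ v1 = z) ->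
  u2 \in B -> v2 \notin B -> e u2 v2 -> ~ (u2 = r /\ v2 = z) -> u1 = u2 /\ v1 = v2.
Proof.
elim: n => [|n IH] B r z Hn HB rB Hdeg Hr u1 v1 u2 v2 u1B v1B e1 n1 u2B v2B e2 n2.
  by move: Hn; rewrite (cardsD1 r) rB.
case: (pickP [pred y | (y \in B) && e r y]) => [y /andP [yB ry] | Hno].
- have Hrl : forall a b, a \in B -> b \in B -> e r a -> e r b -> a = b.
    move=> a b aB bB ea eb; case: Hr => [H|[ez zB]]; first exact: nb1 H ea eb.
    have H2 := nb2 (Hdeg r rB) ez ea eb. apply: H2; apply/eqP => E; subst; by rewrite ?aB ?bB in zB.
  have notr : forall u v, u \in B -> v \notin B -> e u v -> ~ (u = r /\ v = z) -> u != r.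
    move=> u v uB vB euv nuv; apply/eqP => E; subst u.
    have vz : v != z by apply/eqP => E; apply: nuv.
    case: Hr => [H|[ez zB]].
      by have E := nb1 H ry euv; subst; rewrite yB in vB.
    have yz : y != z by apply/eqP => E; subst; rewrite yB in zB.
    by have E := nb2 (Hdeg r rB) ez ry euv yz vz; subst; rewrite yB in vB.
  have yr : y != r by apply/eqP => E; subst; rewrite irr in ry.
  apply: (IH (B :\ r) y r).
  + by move: Hn; rewrite (cardsD1 r B) rB.
  + have HH := @leaf_conn _ _ sym _ _ HB Hrl. exact: HH.
  + by rewrite in_setD1 yr.
  + by move=> v; rewrite in_setD1 => /andP [_ /Hdeg].
  + by right; rewrite sym ry setD11.
  + by rewrite in_setD1 u1B (notr _ _ u1B v1B e1 n1).
  + by rewrite in_setD1 (negbTE v1B) andbF.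
  + exact: e1.
  + by case=> _ E; subst; rewrite rB in v1B.
  + by rewrite in_setD1 u2B (notr _ _ u2B v2B e2 n2).
  + by rewrite in_setD1 (negbTE v2B) andbF.
  + exact: e2.
  + by case=> _ E; subst; rewrite rB in v2B.
- have onlyr : forall u, u \in B -> u = r.
    move=> u uB; apply/eqP/negPn/negP => ur.
    have [y yB ry] := has_nbr HB rB uB ur.
    by have := Hno y; rewrite /= yB ry.
  have E1 := onlyr _ u1B; have E2 := onlyr _ u2B; subst u1 u2.
  have vz1 : v1 != z by apply/eqP => E; apply: n1.
  have vz2 : v2 != z by apply/eqP => E; apply: n2.
  split=> //; case: Hr => [H|[ez zB]]; first exact: nb1 H e1 e2.
  exact: nb2 (Hdeg r rB) ez e1 e2 vz1 vz2.
Qed.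

End Graph2.
Lemma div_unique m k q : 0 < k -> q * k <= m -> m < q.+1 * k -> m %/ k = q.
Proof. move=> k0 h1 h2; apply/eqP; rewrite eqn_leq -ltnS ltn_divLR // leq_divRL // h1 andbT //. Qed.
Lemma A2 n k : 0 < k -> ~~ (k %| n) -> ceil_div n.+1 k = ceil_div n k.
Proof. rewrite /ceil_div => k0 nd. have := divn_eq n k. have := ltn_pmod n k0. move: nd; rewrite /dvdn. set q := n %/ k. set r := n %% k. move=> nd Hr Hn.
rewrite (@div_unique (n.+1 + k - 1) k q.+1) ?(@div_unique (n + k - 1) k q.+1) //; nia.
Qed.
Lemma A1 n k : 0 < k -> k %| n -> ceil_div n.+1 k = (ceil_div n k).+1.
Proof. rewrite /ceil_div => k1 /dvdnP [q ->].
rewrite (@div_unique ((q * k).+1 + k - 1) k q.+1) ?(@div_unique (q*k + k - 1) k q) //; nia.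
Qed.
Lemma A3 n k : 1 < k -> k %| n -> modstar n.+1 k = 1.
Proof. rewrite /modstar => k1 /dvdnP [q ->]. rewrite -addn1 modnMDl modn_small //. Qed.
Lemma A4 n k : 0 < k -> ~~ (k %| n) -> modstar n.+1 k = (n %% k).+1 /\ modstar n k = n %% k.
Proof. rewrite /modstar /dvdn => k0 nd. rewrite (negbTE nd) -addn1 -modnDml; split => //.
have := ltn_pmod n k0. case: (ltnP (n %% k).+1 k) => h _.
  rewrite modn_small ?addn1 //; case: eqP => //; lia.
have E : n %% k + 1 = k by lia. by rewrite E modnn eqxx -addn1 E.
Qed.

Lemma modS n k : 0 < k -> n.+1 %% k = if (n %% k).+1 == k then 0 else (n %% k).+1.
Proof.
move=> k0; rewrite -addn1 -modnDml addn1; have := ltn_pmod n k0.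
case: eqP => [->|H] h; first by rewrite modnn.
by rewrite modn_small //; lia.
Qed.

Lemma compD1 (T : finType) (W : {set T}) w : w \in W -> w |: ~: W = ~: (W :\ w).
Proof. by move=> wW; apply/setP => t; rewrite !inE; case: (eqVneq t w) => [->|]. Qed.

Lemma transfer (T : finType) (e : rel T) (W : {set T}) w : symmetric e ->
  (forall u v, u \in W -> v \notin W -> e u v -> u = w) ->
  (forall a b, a \in W -> b \in W -> e w a -> e w b -> a = b) ->
  out_unique e (W :\ w).
Proof.
move=> sym H1 Hl u1 v1 u2 v2; rewrite !in_setD1.
have key : forall u v, (u != w) && (u \in W) -> ~~ ((v != w) && (v \in W)) -> e u v ->
    v = w /\ u \in W.
  move=> u v /andP [uw uW] vn euv; case/boolP: (v \in W) => vW.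
    by move: vn; rewrite vW andbT negbK => /eqP.
  by have E := H1 u v uW vW euv; rewrite E eqxx in uw.
move=> h1 h2 e1 h3 h4 e2.
have [E1 u1W] := key _ _ h1 h2 e1; have [E2 u2W] := key _ _ h3 h4 e2; subst.
split=> //; apply: Hl => //; by rewrite sym.
Qed.

Section Color.
Variables (T C : finType) (e : rel T) (k : nat) (L : T -> {set C}).
Hypothesis sym : symmetric e.
Hypothesis irr : irreflexive e.
Hypothesis k3 : 3 <= k.
Hypothesis HL : list_assignment k L.

Definition upd (f : T -> C) v c := fun t => if t == v then c else f t.

Lemma card_class_upd (U : {set T}) (f : T -> C) v c c' : v \notin U ->
  #|color_class (v |: U) (upd f v c) c'| = (c == c') + #|color_class U f c'|.
Proof.
move=> vU; rewrite (cardsD1 v) /color_class !inE eqxx /= /upd eqxx; congr (_ + _).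
apply: eq_card => t; rewrite !inE; case: (eqVneq t v) => [-> | tv] //=.
by rewrite (negbTE vU).
Qed.

Lemma class_bound (U : {set T}) (f : T -> C) c : SE_coloring e k L U f -> #|color_class U f c| <= ceil_div #|U| k.
Proof.
case=> _ [H0|[H _]]; last exact: H.
have -> : color_class U f c = set0.
  apply/setP => t; rewrite !inE; apply/negbTE; apply/negP => /andP [tU _].
  by move/eqP: H0; rewrite cards_eq0 => /eqP E; rewrite E inE in tU.
by rewrite cards0.
Qed.

Lemma step (U : {set T}) (f : T -> C) v c : SE_coloring e k L U f -> v \notin U -> c \in L v ->
  (forall u, u \in U -> e v u -> f u != c) ->
  (k %| #|U| \/ #|color_class U f c| < ceil_div #|U| k) ->
  SE_coloring e k L (v |: U) (upd f v c).
Proof.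
move=> HS vU cL Hn Hc; have HS' := HS; case: HS' => [[HL1 HL2] Hsz].
split.
  split.
    move=> t; rewrite in_setU1 /upd; case: (eqVneq t v) => [-> //| tv] /= tU.
    exact: HL1.
  move=> a b; rewrite !in_setU1 /upd.
  case: (eqVneq a v) => [-> | av]; case: (eqVneq b v) => [-> | bv] //=.
  - by rewrite irr.
  - by move=> _ bU evb; rewrite eq_sym; apply: Hn.
  - by move=> aU _ eav; apply: Hn => //; rewrite sym.
  - exact: HL2.
right; rewrite cardsU1 vU /= add1n.
have k0 : 0 < k by apply: leq_trans k3.
have Hb := fun c' => class_bound c' HS.
case/boolP: (k %| #|U|) => kd.
  rewrite A1 // A3 //; last by apply: leq_trans k3.
  split.
    move=> c'; rewrite card_class_upd //; have := Hb c'; case: (c == c') => /=; lia.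
  apply: (@leq_trans #|[set c]|); last by rewrite cards1.
  apply: subset_leq_card; apply/subsetP => c'; rewrite !inE card_class_upd //.
  case: (eqVneq c c') => [E|_]; first by move=> _; apply/eqP. rewrite add0n => /eqP E.
  by have := Hb c'; rewrite E ltnn.
have [E1 E2] := A4 k0 kd; rewrite A2 // E1.
have n0 : #|U| != 0 by apply/negP => /eqP E; rewrite E dvdn0 in kd.
have Hfull : #|[set c | #|color_class U f c| == ceil_div #|U| k]| <= #|U| %% k.
  by case: Hsz => [E|[_ H]]; [rewrite E in n0 | rewrite -E2].
have Hlt : #|color_class U f c| < ceil_div #|U| k by case: Hc => //; rewrite (negbTE kd).
split.
  move=> c'; rewrite card_class_upd //; have := Hb c'.
  case: (eqVneq c c') => [<- |] /= _; [by rewrite add1n | by rewrite add0n].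
apply: (@leq_trans #|c |: [set c | #|color_class U f c| == ceil_div #|U| k]|).
  apply: subset_leq_card; apply/subsetP => c'; rewrite !inE card_class_upd //.
  by case: (eqVneq c' c) => [//|cc] /=; rewrite ?add0n.
by rewrite cardsU1; case: (_ \in _) => /=; lia.
Qed.

Lemma k0 : 0 < k. Proof. exact: leq_trans k3. Qed.

Lemma pickc (U : {set T}) (f : T -> C) (S : {set C}) : SE_coloring e k L U f ->
  (if k %| #|U| then 0 < #|S| else #|U| %% k < #|S|) ->
  exists2 c, c \in S & (k %| #|U| \/ #|color_class U f c| < ceil_div #|U| k).
Proof.
move=> HS; case: ifP => kd H.
  have /set0Pn [c cS] : S != set0 by rewrite -card_gt0.
  by exists c => //; left.
case: (pickP [pred c | (c \in S) && (#|color_class U f c| < ceil_div #|U| k)]) =>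
  [c /andP [cS cl] | Hno]; first by exists c => //; right.
exfalso; have [_ E2] := A4 k0 (negbT kd).
have Hsub : S \subset [set c | #|color_class U f c| == ceil_div #|U| k].
  apply/subsetP => c cS; rewrite inE eqn_leq class_bound //=.
  by have := Hno c; rewrite /= cS /= => /negbT; rewrite -leqNgt.
case: HS => _ [E|[_ Hf]]; first by rewrite E dvdn0 in kd.
have := subset_leq_card Hsub; rewrite E2 in Hf; lia.
Qed.

Lemma cardD1k (v : T) a : k.-1 <= #|L v :\ a|.
Proof. have := cardsD1 a (L v); rewrite HL; case: (_ \in _) => /=; lia. Qed.

Lemma cardD2k (v : T) a b : k.-2 <= #|L v :\ a :\ b|.
Proof. have := cardsD1 b (L v :\ a); have := cardD1k v a; case: (_ \in _) => /=; lia. Qed.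

Lemma upd_out (f : T -> C) v c t : t != v -> upd f v c t = f t.
Proof. by rewrite /upd => /negbTE ->. Qed.

Lemma pairlem (W : {set T}) (f : T -> C) w y x : SE_coloring e k L (~: W) f ->
  w \in W -> y \in W -> w != y -> W :\ w :\ y = set0 ->
  (forall u, u \in ~: W -> e w u -> u = x) -> (forall u, u \in ~: W -> ~~ e y u) ->
  #|~: W| %% k = k.-2 -> exists g, SE_coloring e k L setT g /\ (forall v, v \in ~: W -> g v = f v).
Proof.
move=> HS wW yW wy W0 Hwn Hyn Hn.
have kd : ~~ (k %| #|~: W|) by rewrite /dvdn Hn; have := k3; lia.
have [a aS Ha] := pickc (S := L w :\ f x) HS (ltac:(
  by rewrite (negbTE kd) Hn; have := cardD1k w (f x); have := k3; lia)).
have [b bS Hb] := pickc (S := L y :\ a) HS (ltac:(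
  by rewrite (negbTE kd) Hn; have := cardD1k y a; have := k3; lia)).
have aL : a \in L w by move: aS; rewrite in_setD1 => /andP [].
have bL : b \in L y by move: bS; rewrite in_setD1 => /andP [].
have ba : b != a by move: bS; rewrite in_setD1 => /andP [].
have HS1' : SE_coloring e k L (w |: ~: W) (upd f w a).
  apply: step HS _ _ _ Ha; first by rewrite inE wW.
    by move: aS; rewrite in_setD1 => /andP [].
  move=> u uU ewu; rewrite (Hwn u uU ewu) eq_sym.
  by move: aS; rewrite in_setD1 => /andP [].
have wU : w \notin ~: W by rewrite inE wW.
exists (upd (upd f w a) y b); split.
  have -> : [set: T] = y |: (w |: ~: W).
    apply/setP => t; rewrite in_setT !in_setU1 in_setC; apply/esym.
    case: (eqVneq t y) => // ty; case: (eqVneq t w) => // tw.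
    apply/negP => tW; have : t \in W :\ w :\ y by rewrite !in_setD1 ty tw tW.
    by rewrite W0 inE.
  apply: step HS1' _ bL _ _.
  - by rewrite in_setU1 in_setC yW orbF eq_sym.
  - move=> u; rewrite in_setU1 => /orP [/eqP -> _|uU eyu].
      by rewrite /upd eqxx eq_sym.
    by have := Hyn u uU; rewrite eyu.
  - right; rewrite card_class_upd // eq_sym (negbTE ba) add0n cardsU1 wU /=.
    rewrite A2 //; first by case: Hb => //; rewrite (negbTE kd).
    exact: k0.
move=> v vU; rewrite !upd_out //; apply/eqP => E; subst;
  by rewrite inE ?wW ?yW in vU.
Qed.

End Color.

Lemma L1 n k : 3 <= k -> n %% k = k.-1 -> ~~ (k %| n).
Proof. rewrite /dvdn => k3 ->; lia. Qed.
Lemma L2 n k : 3 <= k -> n %% k = k.-2 -> ~~ (k %| n).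
Proof. rewrite /dvdn => k3 ->; lia. Qed.
Lemma L3 a k : 3 <= k -> k.-2 <= a -> 0 < a.
Proof. lia. Qed.
Lemma L5 n k a : 3 <= k -> n %% k != k.-1 -> k.-1 <= a ->
  (if k %| n then 0 < a else n %% k < a).
Proof.
move=> k3 h1 h2; have k0 : 0 < k by lia.
have := ltn_pmod n k0; case: ifP => _ h3; lia.
Qed.
Lemma L8 n k : 3 <= k -> n %% k = k.-1 -> k %| n.+1.
Proof.
move=> k3 h; have k0 : 0 < k by lia.
by rewrite /dvdn modS // h prednK // eqxx.
Qed.
Lemma L4 n k : 3 <= k -> n %% k = k.-1 -> n.+2 %% k != k.-1.
Proof.
move=> k3 h; have k0 : 0 < k by lia.
rewrite modS // modS // h prednK // eqxx /=; case: ifP => _; lia.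
Qed.
Lemma L6 n k : 3 <= k -> n %% k != k.-1 -> n %% k != k.-2 -> n.+1 %% k != k.-1.
Proof.
move=> k3 h1 h2; have k0 : 0 < k by lia.
have := ltn_pmod n k0; rewrite modS //; case: ifP => _ h3; lia.
Qed.
Lemma L9 n k : 3 <= k -> n %% k != k.-2 -> n.+1 %% k != k.-1.
Proof.
move=> k3 h2; have k0 : 0 < k by lia.
have := ltn_pmod n k0; rewrite modS //; case: ifP => _ h3; lia.
Qed.
Lemma L10 k : 3 <= k -> 0 < k.
Proof. lia. Qed.

Section Main.
Variables (T C : finType) (e : rel T) (k : nat) (L : T -> {set C}).
Hypothesis sym : symmetric e.
Hypothesis irr : irreflexive e.
Hypothesis k3 : 3 <= k.
Hypothesis HL : list_assignment k L.

Lemma mainlem m : forall (W : {set T}) (f : T -> C) w x, #|W| = m.+1 ->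
  SE_coloring e k L (~: W) f -> w \in W -> x \notin W -> e w x ->
  out_unique e W -> induced_connected e W -> (forall v, v \in W -> deg e v <= 2) ->
  (0 < m \/ #|~: W| %% k != k.-1) ->
  exists g, SE_coloring e k L setT g /\ (forall v, v \in ~: W -> g v = f v).
Proof.
have k0 : 0 < k by apply: leq_trans k3.
elim/ltn_ind: m => m IH W f w x Hm HS wW xW ewx HU HC Hdeg Hcond.
have Hwx : forall u v, u \in W -> v \notin W -> e u v -> u = w /\ v = x.
  by move=> u v uW vW euv; apply: HU.
have Hwl : forall a b, a \in W -> b \in W -> e w a -> e w b -> a = b.
  move=> a b aW bW ea eb; apply: (nb2 (Hdeg w wW) ewx ea eb); apply/eqP => E; subst.
    by rewrite aW in xW.
  by rewrite bW in xW.
have Hwn : forall u, u \in ~: W -> e w u -> u = x.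
  by move=> u; rewrite inE => uW ewu; case: (Hwx w u wW uW ewu).
have EW' : w |: ~: W = ~: (W :\ w) := compD1 wW.
have wU : w \notin ~: W by rewrite inE wW.
have Hm' : #|W :\ w| = m by move: Hm; rewrite (cardsD1 w W) wW add1n; case.
have xw : x != w by apply/eqP => E; subst; rewrite wW in xW.
case: m IH Hm Hcond Hm' => [|m] IH Hm Hcond Hm'.
  case: Hcond => // Hcond.
  have [c cS Hc] := pickc (S := L w :\ f x) k3 HS (ltac:(
    exact: L5 k3 Hcond (cardD1k k3 HL w (f x)))).
  have cL : c \in L w by move: cS; rewrite in_setD1 => /andP [].
  exists (upd f w c); split.
    have -> : [set: T] = w |: ~: W.
      rewrite EW'; have -> : W :\ w = set0 by apply/eqP; rewrite -cards_eq0 Hm'.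
      by rewrite setC0.
    apply: (step sym irr k3 HS wU cL _ Hc) => //.
    move=> u uU ewu; rewrite (Hwn u uU ewu) eq_sym.
    by move: cS; rewrite in_setD1 => /andP [].
  by move=> v vU; rewrite upd_out //; apply/eqP => E; subst; rewrite inE wW in vU.
have /set0Pn [b0 b0W'] : W :\ w != set0 by rewrite -card_gt0 Hm'.
have [b0w b0W] : b0 != w /\ b0 \in W by move: b0W'; rewrite in_setD1 => /andP.
have [y yW ewy] := has_nbr HC wW b0W b0w.
have yw : y != w by apply/eqP => E; subst; rewrite irr in ewy.
have yW' : y \in W :\ w by rewrite in_setD1 yw.
have yU : y \notin ~: W by rewrite inE yW.
have HC' : induced_connected e (W :\ w).
  by have HH := @leaf_conn _ _ sym _ _ HC Hwl; exact: HH.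
have HU' : out_unique e (W :\ w) :=
  transfer sym (fun u v uW vW euv => (Hwx u v uW vW euv).1) Hwl.
have Hdeg' : forall v, v \in W :\ w -> deg e v <= 2.
  by move=> v; rewrite in_setD1 => /andP [_ /Hdeg].
have wW' : w \notin W :\ w by rewrite setD11.
have eyw : e y w by rewrite sym.
have ny : forall u, u \in ~: W -> ~~ e y u.
  move=> u; rewrite inE => uW; apply/negP => eyu; have [E _] := Hwx y u yW uW eyu.
  by rewrite E eqxx in yw.
have Hn1 : #|~: (W :\ w)| = #|~: W|.+1 by rewrite -EW' cardsU1 wU.
have Hmod1 := modS #|~: W| k0.
have Hltk := ltn_pmod #|~: W| k0.
case E1 : (#|~: W| %% k == k.-1).
  have kd : ~~ (k %| #|~: W|) := L1 k3 (eqP E1).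
  have [b bL Hb] := pickc (S := L y) k3 HS (ltac:(
    by rewrite (negbTE kd) HL (eqP E1) ltn_predL)).
  have HS1 : SE_coloring e k L (y |: ~: W) (upd f y b).
    apply: (step sym irr k3 HS yU bL _ Hb) => u uU eyu.
    by have := ny u uU; rewrite eyu.
  have Hn1' : #|y |: ~: W| = #|~: W|.+1 by rewrite cardsU1 yU.
  have kd1 : k %| #|y |: ~: W|.
    by rewrite Hn1'; apply: L8 k3 (eqP E1).
  have [a aS Ha] := pickc (S := L w :\ f x :\ b) k3 HS1 (ltac:(
    by rewrite kd1; apply: L3 k3 (cardD2k k3 HL w (f x) b))).
  move: aS; rewrite !in_setD1 => /and3P [ab afx aL].
  have wU1 : w \notin y |: ~: W by rewrite in_setU1 negb_or eq_sym yw wU.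
  have HS2 : SE_coloring e k L (w |: (y |: ~: W)) (upd (upd f y b) w a).
    apply: (step sym irr k3 HS1 wU1 aL _ Ha) => u.
    rewrite in_setU1 => /orP [/eqP -> _ | uU ewu].
      by rewrite /upd eqxx eq_sym.
    rewrite (Hwn u uU ewu) upd_out 1?eq_sym //.
    by apply/eqP => E; subst; rewrite yW in xW.
  have E3 : w |: (y |: ~: W) = ~: (W :\ w :\ y) by rewrite setUCA EW' (compD1 yW').
  have ext2 : forall v, v \in ~: W -> upd (upd f y b) w a v = f v.
    move=> v vU; rewrite !upd_out //; apply/eqP => E; subst.
      by rewrite inE yW in vU.
    by rewrite inE wW in vU.
  have wU2 : w \notin y |: ~: W := wU1.
  case: m IH Hm Hcond Hm' => [|m] IH Hm Hcond Hm'.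
    exists (upd (upd f y b) w a); split => //.
    have W0 : W :\ w :\ y = set0.
      apply/eqP; rewrite -cards_eq0; move: Hm'; rewrite (cardsD1 y (W :\ w)) yW' add1n.
      by case => ->.
    by rewrite -setC0 -W0 -E3.
  have /set0Pn [b1 b1W''] : W :\ w :\ y != set0.
    by rewrite -card_gt0; move: Hm'; rewrite (cardsD1 y (W :\ w)) yW' add1n; case => ->.
  have [b1y b1W'] : b1 != y /\ b1 \in W :\ w by move: b1W''; rewrite in_setD1 => /andP.
  have [z zW' eyz] := has_nbr HC' yW' b1W' b1y.
  have Hyl : forall a b, a \in W :\ w -> b \in W :\ w -> e y a -> e y b -> a = b.
    move=> a' b' aW bW ea eb; apply: (nb2 (Hdeg y yW) eyw ea eb); apply/eqP => E.
      by move: aW; rewrite E setD11.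
    by move: bW; rewrite E setD11.
  have zy : z != y by apply/eqP => E; subst; rewrite irr in eyz.
  have HU'' : out_unique e (W :\ w :\ y) :=
    transfer sym (fun u v uW vW euv => (HU' u v y w uW vW euv yW' wW' eyw).1) Hyl.
  have HC'' : induced_connected e (W :\ w :\ y).
    by have HH := @leaf_conn _ _ sym _ _ HC' Hyl; exact: HH.
  have [g [Hg Hgx]] := IH m (leqW (leqnn m.+1)) (W :\ w :\ y) (upd (upd f y b) w a) z y
    (ltac:(by move: Hm'; rewrite (cardsD1 y (W :\ w)) yW' add1n; case))
    (ltac:(by rewrite -E3))
    (ltac:(by rewrite in_setD1 zy zW'))
    (ltac:(by rewrite setD11))
    (ltac:(by rewrite sym))
    HU'' HC''
    (ltac:(by move=> v; rewrite in_setD1 => /andP [_ /Hdeg']))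
    (ltac:(by right; rewrite -E3 cardsU1 wU1 Hn1'; apply: L4 k3 (eqP E1))).
  exists g; split => // v vU; rewrite Hgx ?ext2 //.
  by rewrite -E3 !in_setU1 vU !orbT.
case E2 : ((m == 0) && (#|~: W| %% k == k.-2)).
  case/andP: E2 => /eqP m0 /eqP E2; subst m.
  have W0 : W :\ w :\ y = set0.
    apply/eqP; rewrite -cards_eq0; move: Hm'; rewrite (cardsD1 y (W :\ w)) yW' add1n.
    by case => ->.
  exact: (pairlem sym irr k3 HL HS wW yW (ltac:(by rewrite eq_sym)) W0 Hwn ny E2).
have Hc3 : (if k %| #|~: W| then 0 < #|L w :\ f x| else #|~: W| %% k < #|L w :\ f x|).
  by apply: L5 k3 (negbT E1) (cardD1k k3 HL w (f x)).
have [a aS Ha] := pickc (S := L w :\ f x) k3 HS Hc3.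
move: aS; rewrite !in_setD1 => /andP [afx aL].
have HS1 : SE_coloring e k L (w |: ~: W) (upd f w a).
  apply: (step sym irr k3 HS wU aL _ Ha) => u uU ewu.
  by rewrite (Hwn u uU ewu) eq_sym.
have [g [Hg Hgx]] := IH m (leqnn m.+1) (W :\ w) (upd f w a) y w Hm'
  (ltac:(by rewrite -EW')) yW' wW' eyw HU' HC' Hdeg'
  (ltac:(case: (posnP m) => [m0|mpos]; [right | by left];
         move: E2; rewrite m0 /= => /negbT E2; rewrite Hn1; exact: L6 k3 (negbT E1) E2)).
exists g; split => // v vU; rewrite Hgx; first by rewrite upd_out //; apply/eqP => E;
  subst; rewrite inE wW in vU.
by rewrite -EW' in_setU1 vU orbT.
Qed.

End Main.

Theorem corollary4p4 (T C : finType) (e : rel T) (k : nat) (L : T -> {set C})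
  (B : {set T}) (r : T) :
  simple_graph e -> 3 <= k -> list_assignment k L ->
  is_bug e B r -> deg e r <= 1 ->
  (2 <= #|B| \/
   (forall u v, u \in B -> v \notin B -> ~~ e u v) \/
   ~~ (k %| #|T|)) ->
  safe e k L B.
Proof.
move=> [sym irr] k3 HL [rB HC Hsub] dr Hcase f HS.
have k0 : 0 < k := L10 k3.
have Hdeg : forall v, v \in B -> deg e v <= 2.
  move=> v vB; case: (eqVneq v r) => [->|vr]; first by apply: leq_trans dr _.
  rewrite leqNgt; apply/negP => h.
  have : v \in B :&: V3plus e by rewrite inE vB inE h.
  by move/(subsetP Hsub); rewrite inE (negbTE vr).
have HU : out_unique e B.
  move=> u1 v1 u2 v2 u1B v1B e1 u2B v2B e2.
  apply: (Qlem sym irr (n := #|B|) (z := r) (leqnn _) HC rB Hdeg (or_introl dr)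
     u1B v1B e1 _ u2B v2B e2 _).
    by case=> _ E; subst; rewrite rB in v1B.
  by case=> _ E; subst; rewrite rB in v2B.
have rU : r \notin ~: B by rewrite inE rB.
have B0 : 0 < #|B| by rewrite card_gt0; apply/set0Pn; exists r.
case: (pickP [pred p : T * T | [&& p.1 \in B, p.2 \notin B & e p.1 p.2]]) =>
  [[w x] /and3P [wB xB ewx] | Hno].
  have Hm : #|B| = (#|B|.-1).+1 by rewrite prednK.
  apply: (mainlem sym irr k3 HL Hm HS wB xB ewx HU HC Hdeg).
  case: (posnP #|B|.-1) => [m0|]; [right|by left].
  case: Hcase => [h|[h|h]].
  - by move: h m0; case: #|B| => [|[|n]].
  - by have := h w x wB xB; rewrite ewx.
  - apply/negP => /eqP E; move: h; rewrite -(cardsC B).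
    have -> : #|B| = 1 by move: B0 m0; case: #|B| => [|[|n]].
    by rewrite add1n (L8 k3 E).
have nbE : forall u v, u \in B -> v \notin B -> ~~ e u v.
  move=> u v uB vB; apply/negP => euv; by have := Hno (u, v); rewrite /= uB vB euv.
have [c cL Hc] := pickc (S := L r) k3 HS (ltac:(
  rewrite HL; case: ifP => _; [exact: k0 | exact: ltn_pmod])).
have HS1 : SE_coloring e k L (r |: ~: B) (upd f r c).
  apply: (step sym irr k3 HS rU cL _ Hc) => u; rewrite inE => uB eru.
  by have := nbE r u rB uB; rewrite eru.
have ER : r |: ~: B = ~: (B :\ r) := compD1 rB.
have Hm' : #|B :\ r| = #|B|.-1 by rewrite (cardsD1 r B) rB.
have ext1 : forall v, v \in ~: B -> upd f r c v = f v.
  by move=> v vU; rewrite upd_out //; apply/eqP => E; subst; rewrite inE rB in vU.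
case: (eqVneq #|B| 1) => [B1|B2].
  exists (upd f r c); split => //.
  have W0 : B :\ r = set0 by apply/eqP; rewrite -cards_eq0 Hm' B1.
  by rewrite -setC0 -W0 -ER.
have /set0Pn [b bB'] : B :\ r != set0.
  by rewrite -card_gt0 Hm'; move: B0 B2; case: #|B| => [|[|n]].
have [br bB] : b != r /\ b \in B by move: bB'; rewrite in_setD1 => /andP.
have [y yB ery] := has_nbr HC rB bB br.
have yr : y != r by apply/eqP => E; subst; rewrite irr in ery.
have yB' : y \in B :\ r by rewrite in_setD1 yr.
have Hrl : forall a b, a \in B -> b \in B -> e r a -> e r b -> a = b.
  by move=> a b' _ _ ea eb; apply: nb1 dr ea eb.
have HC' : induced_connected e (B :\ r).
  by have HH := @leaf_conn _ _ sym _ _ HC Hrl; exact: HH.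
have HU' : out_unique e (B :\ r).
  apply: (transfer sym _ Hrl) => u v uB vB euv.
  by have := nbE u v uB vB; rewrite euv.
case Ep : ((#|B| == 2) && (#|~: B| %% k == k.-2)).
  case/andP: Ep => /eqP Bc /eqP Ek.
  have W0 : B :\ r :\ y = set0.
    apply/eqP; rewrite -cards_eq0; move: Hm'; rewrite (cardsD1 y (B :\ r)) yB' Bc add1n.
    by case => ->.
  apply: (pairlem sym irr k3 HL (x := r) HS rB yB (ltac:(by rewrite eq_sym)) W0 _ _ Ek).
    by move=> u; rewrite inE => uB eru; have := nbE r u rB uB; rewrite eru.
  by move=> u; rewrite inE => uB; apply: nbE.
have Hm2 : #|B :\ r| = (#|B|.-2).+1 by rewrite Hm'; move: B0 B2; case: #|B| => [|[|n]].
have HS1' : SE_coloring e k L (~: (B :\ r)) (upd f r c) by rewrite -ER.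
have rB' : r \notin B :\ r by rewrite setD11.
have eyr : e y r by rewrite sym.
have Hdeg' : forall v, v \in B :\ r -> deg e v <= 2.
  by move=> v; rewrite in_setD1 => /andP [_ /Hdeg].
have Hcnd : 0 < #|B|.-2 \/ #|~: (B :\ r)| %% k != k.-1.
  (case: (posnP #|B|.-2) => [m0|]; [right | by left];
         rewrite -ER cardsU1 rU add1n; apply: L9 k3 _;
         apply/negP => h; move: Ep; rewrite h andbT;
         by move: B0 B2 m0; case: #|B| => [|[|[|n]]]).
have [g [Hg Hgx]] := mainlem sym irr k3 HL Hm2 HS1' yB' rB' eyr HU' HC' Hdeg' Hcnd.
exists g; split => // v vU; rewrite Hgx ?ext1 //.
by rewrite -ER in_setU1 vU orbT.
Qed.
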